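(* Let $\mathcal C$ be an SCW code with $M\ge2$ codewords of length $K$ over the symbol set $\mathcal S$, used with equiprobable codewords over the Poisson channel with fixed CSI $(\bar c_{\mathrm s},\bar c_{\mathrm n})\in(0,\infty)^2$, and let $P_e^{\mathrm{code}}$ be the codeword error rate of the optimal (coherent ML) detector. Then for every $t>0$, $$P_e^{\mathrm{code}}\le\frac1M\sum_{\mathbf s\in\mathcal C}\ \sum_{\hat{\mathbf s}\in\mathcal C,\,\hat{\mathbf s}\ne\mathbf s}\exp\!\left(\sum_{k=1}^K\lambda[k]\left(e^{\varpi[k]t}-1\right)\right),$$ where $\lambda[k]=s[k]\bar c_{\mathrm s}+\bar c_{\mathrm n}$ and $\varpi[k]=\ln\!\left(\frac{1+\hat s[k]\,\mathsf{SNR}}{1+s[k]\,\mathsf{SNR}}\right)$ with $\mathsf{SNR}=\bar c_{\mathrm s}/\bar c_{\mathrm n}$.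
   Context: Symbol set $\mathcal S=\{\eta_0,\dots,\eta_{L-1}\}$ with $0=\eta_0<\dots<\eta_{L-1}=1$. An SCW code with weight vector $\bar{\boldsymbol\omega}$ is a codebook $\mathcal C\subseteq\mathcal S^K$ ($K=\sum_\ell\bar\omega_\ell$) in which every codeword has exactly $\bar\omega_\ell$ entries equal to $\eta_\ell$ for each $\ell$. Channel: given transmitted codeword $\mathbf s$, the observations $r[1],\dots,r[K]$ are independent with $r[k]$ Poisson of mean $s[k]\bar c_{\mathrm s}+\bar c_{\mathrm n}$. The optimal detector outputs a codeword maximizing the likelihood $\prod_{k}\frac{(\bar c_{\mathrm s}s[k]+\bar c_{\mathrm n})^{r[k]}e^{-\bar c_{\mathrm s}s[k]-\bar c_{\mathrm n}}}{r[k]!}$ over $\mathcal C$, ties broken uniformly at random among maximizers. The transmitted codeword is uniform on $\mathcal C$, and $P_e^{\mathrm{code}}$ is the probability that the detected codeword differs from the transmitted one. *)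

(* Defs.v *)
From HB Require Import structures.
From mathcomp Require Import all_boot all_order all_algebra.
From mathcomp Require Import all_classical all_reals all_analysis.
Set Implicit Arguments. Unset Strict Implicit. Unset Printing Implicit Defensive.
Import Order.TTheory GRing.Theory Num.Theory.
Local Open Scope ring_scope.
Local Open Scope classical_set_scope.

Section SCW.
Variables (R : realType) (L K : nat) (eta : 'I_L -> R).

(* A codeword of S^K is represented by the indices of its symbols:
   c : {ffun 'I_K -> 'I_L} stands for the word k |-> eta (c k). *)
Definition word := {ffun 'I_K -> 'I_L}.
Definition obs := {ffun 'I_K -> nat}.

Definition sym (c : word) (k : 'I_K) : R := eta (c k).

Definition is_SCW (omega : 'I_L -> nat) (C : {set word}) : Prop :=
  K = (\sum_(l < L) omega l)%N /\
  forall c, c \in C -> forall l : 'I_L, #|[set k | c k == l]| = omega l.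

Definition lik (cs cn : R) (c : word) (r : obs) : R :=
  \prod_(k < K) ((cs * sym c k + cn) ^+ r k * expR (- (cs * sym c k + cn))
                   / (r k)`!%:R).

Definition mlset (cs cn : R) (C : {set word}) (r : obs) : {set word} :=
  [set c in C | [forall c' in C, lik cs cn c' r <= lik cs cn c r]].

Definition pdetect (cs cn : R) (C : {set word}) (r : obs) (c : word) : R :=
  if c \in mlset cs cn C r then (#|mlset cs cn C r|%:R)^-1 else 0.

Definition Pe_code (cs cn : R) (C : {set word}) : \bar R :=
  ((#|C|%:R)^-1)%:E *
  (\sum_(s in C) \esum_(r in [set: obs])
      (lik cs cn s r * (1 - pdetect cs cn C r s))%:E)%E.

Definition chernoff_bound (cs cn t : R) (C : {set word}) : R :=
  let SNR := cs / cn in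
  (#|C|%:R)^-1 *
  \sum_(s in C) \sum_(sh in C | sh != s)
    expR (\sum_(k < K) (sym s k * cs + cn) *
           (expR (ln ((1 + sym sh k * SNR) / (1 + sym s k * SNR)) * t) - 1)).

End SCW.

(* Main.v *)
Require Import Defs.
From HB Require Import structures.
From mathcomp Require Import all_boot all_order all_algebra.
From mathcomp Require Import all_classical all_reals all_analysis.
From mathcomp Require Import ring lra.
Import Order.TTheory GRing.Theory Num.Theory.
Local Open Scope ring_scope.

Lemma exp_partial (R : realType) (y : R) n : 0 <= y ->
  \sum_(j < n) y ^+ j / j`!%:R <= expR y.
Proof.
move=> y0.
have := @nondecreasing_cvgn_le R (series (exp_coeff y)) _ (is_cvg_series_exp_coeff y) n.
rewrite /series /= big_mkord; apply.
apply: (@nondecreasing_series R (exp_coeff y) predT 0) => k _ _.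
exact: exp_coeff_ge0.
Qed.

Lemma core (R : realType) (K : nat) (a y : 'I_K -> R) (hy : forall k, 0 <= y k)
  (s : seq (obs K)) : uniq s ->
  \sum_(r <- s) \prod_(k < K) (expR (- a k) * (y k ^+ r k / (r k)`!%:R))
  <= \prod_(k < K) (expR (- a k) * expR (y k)).
Proof.
move=> us.
set N := (\max_(r <- s) \max_(k < K) r k)%N.
have hN : forall r, r \in s -> forall k, (r k < N.+1)%N.
  move=> r rs k; rewrite ltnS.
  apply: (leq_trans _ (@leq_bigmax_seq _ s xpredT (fun r : obs K => \max_(k < K) r k)%N r rs (erefl true))).
  exact: (@leq_bigmax _ (fun k => r k) k).
pose psi (r : obs K) : {ffun 'I_K -> 'I_N.+1} := [ffun k => inord (r k)].
pose phi (f : {ffun 'I_K -> 'I_N.+1}) : obs K := [ffun k => val (f k)].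
have ephi : {in s, cancel psi phi}.
  by move=> r rs; apply/ffunP => k; rewrite !ffunE /=; exact: inordK (hN r rs k).
have -> : s = map phi (map psi s).
  by rewrite -map_comp map_id_in //.
rewrite big_map big_uniq /=; last by rewrite (map_inj_in_uniq (can_in_inj ephi)).
set F := fun k (j : 'I_N.+1) => expR (- a k) * (y k ^+ j / j`!%:R).
apply: (@le_trans _ _ (\sum_(f : {ffun 'I_K -> 'I_N.+1}) \prod_(k < K) F k (f k))).
  rewrite [X in _ <= X](bigID (mem (map psi s))) /= -[X in X <= _]addr0.
  apply: lerD.
    apply: ler_sum => f _; apply: ler_prod => k _; rewrite !ffunE /F /=.
    by rewrite lexx andbT mulr_ge0 ?expR_ge0 // divr_ge0 // exprn_ge0.
  apply: sumr_ge0 => f _; apply: prodr_ge0 => k _; rewrite /F.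
  by rewrite mulr_ge0 ?expR_ge0 // divr_ge0 // exprn_ge0.
rewrite -bigA_distr_bigA /=; apply: ler_prod => k _; apply/andP; split.
  by apply: sumr_ge0 => j _; rewrite /F mulr_ge0 ?expR_ge0 // divr_ge0 // exprn_ge0.
rewrite /F -mulr_sumr ler_wpM2l ?expR_ge0 //.
exact: exp_partial.
Qed.

Lemma sym_sum (R : realType) (L K : nat) (eta : 'I_L -> R) (omega : 'I_L -> nat)
  (C : {set word L K}) : is_SCW omega C -> forall c, c \in C ->
  \sum_k sym eta c k = \sum_l (omega l)%:R * eta l.
Proof.
move=> [_ hC] c cC.
have e : forall k, sym eta c k = \sum_l (if c k == l then eta l else 0).
  by move=> k; rewrite -big_mkcond (big_pred1 (c k)) // => l; rewrite /= eq_sym.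
rewrite (eq_bigr _ (fun k _ => e k)) exchange_big /=; apply: eq_bigr => l _.
rewrite -big_mkcond /= -(hC c cC l) -mulr_natl.
rewrite (eq_bigl (fun k => k \in [set k | c k == l])); last by move=> k; rewrite inE.
rewrite sumr_const mulr1 mulr_natl; congr (_ *+ _); apply: eq_card => k.
rewrite !inE; apply/idP/idP => h; [exact: mem_set | exact: (set_mem h)].
Qed.

Section S.
Variables (R : realType) (L K : nat) (eta : 'I_L -> R) (cs cn : R).
Hypothesis heta : forall i, 0 <= eta i.
Hypothesis hcs : 0 < cs.
Hypothesis hcn : 0 < cn.

Definition lam (c : word L K) k := cs * sym eta c k + cn.

Lemma lam_gt0 c k : 0 < lam c k.
Proof. by rewrite /lam /sym ltr_wpDl // mulr_ge0 // ltW. Qed.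

Lemma lik_gt0 (c : word L K) r : 0 < lik eta cs cn c r.
Proof.
apply: prodr_gt0 => k _; rewrite divr_gt0 ?ltr0n ?fact_gt0 //.
by rewrite mulr_gt0 ?expR_gt0 // exprn_gt0 // lam_gt0.
Qed.

Lemma lik_ratio (c c' : word L K) r :
  \sum_k sym eta c k = \sum_k sym eta c' k ->
  lik eta cs cn c' r = lik eta cs cn c r * \prod_k (lam c' k / lam c k) ^+ r k.
Proof.
move=> hs.
have e : forall k, (cs * sym eta c' k + cn) ^+ r k * expR (- (cs * sym eta c' k + cn)) / (r k)`!%:R
   = ((cs * sym eta c k + cn) ^+ r k * expR (- (cs * sym eta c k + cn)) / (r k)`!%:R)
     * (lam c' k / lam c k) ^+ r k * expR (lam c k - lam c' k).
  move=> k; rewrite expr_div_n /lam.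
  have h0 : (cs * sym eta c k + cn) ^+ r k != 0 by rewrite expf_neq0 // gt_eqF // (lam_gt0 c k).
  have -> : expR (- (cs * sym eta c' k + cn)) = expR (- (cs * sym eta c k + cn)) * expR ((cs * sym eta c k + cn) - (cs * sym eta c' k + cn)).
    by rewrite -expRD; congr expR; ring.
  move: h0; set A := (_ ^+ r k); set B := (_ ^+ r k); set E1 := expR _; set E2 := expR _; set F := (r k)`!%:R.
  have hF : F != 0 by rewrite /F pnatr_eq0 -lt0n fact_gt0.
  by move=> h0; field; rewrite hF h0.
rewrite /lik (eq_bigr _ (fun k _ => e k)) big_split big_split /= -expR_sum.
rewrite [X in expR X](_ : _ = 0) ?expR0 ?mulr1 //.
rewrite sumrB /lam !big_split /= -!mulr_sumr hs; ring.
Qed.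


Definition xk (s sh : word L K) (t : R) k :=
  expR (ln ((1 + sym eta sh k * (cs / cn)) / (1 + sym eta s k * (cs / cn))) * t).

Lemma rho_eq (s sh : word L K) k :
  (1 + sym eta sh k * (cs / cn)) / (1 + sym eta s k * (cs / cn)) = lam sh k / lam s k.
Proof.
have h1 : cn != 0 by rewrite gt_eqF.
have h2 : lam s k != 0 by rewrite gt_eqF // lam_gt0.
have h3 : 1 + sym eta s k * (cs / cn) != 0.
  by rewrite gt_eqF // (lt_le_trans ltr01) // lerDl mulr_ge0 ?divr_ge0 ?heta // ltW.
move: h2; rewrite /lam => h2; field; by apply/andP; split.
Qed.

Lemma X_ge1 (s sh : word L K) r t : 0 < t ->
  \sum_k sym eta s k = \sum_k sym eta sh k ->
  lik eta cs cn s r <= lik eta cs cn sh r ->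
  1 <= \prod_k xk s sh t k ^+ r k.
Proof.
move=> ht hs hl.
have hr : forall k, 0 < lam sh k / lam s k by move=> k; rewrite divr_gt0 // lam_gt0.
have eP : \prod_k xk s sh t k ^+ r k
   = expR (t * \sum_k ln (lam sh k / lam s k) * (r k)%:R).
  rewrite mulr_sumr expR_sum; apply: eq_bigr => k _.
  by rewrite /xk rho_eq -expRM_natr; congr expR; rewrite mulrCA mulrA.
rewrite eP -[X in X <= _]expR0 ler_expR mulr_ge0 ?(ltW ht) //.
rewrite leNgt; apply/negP => hA.
have : expR (\sum_k ln (lam sh k / lam s k) * (r k)%:R) < 1 by rewrite expR_lt1.
rewrite expR_sum (eq_bigr (fun k => (lam sh k / lam s k) ^+ r k)); last first.
  by move=> k _; rewrite expRM_natr lnK // posrE.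
move: hl; rewrite (lik_ratio s sh r hs) -{1}[lik eta cs cn s r]mulr1 ler_pM2l ?lik_gt0 //.
by move=> h1 h2; have := le_lt_trans h1 h2; rewrite ltxx.
Qed.


Lemma pdetect_ge0 (C : {set word L K}) r s : 0 <= pdetect eta cs cn C r s.
Proof. by rewrite /pdetect; case: ifP => // _; rewrite invr_ge0 ler0n. Qed.

Lemma pointwise (C : {set word L K}) (s : word L K) r t : 0 < t -> s \in C ->
  (forall sh, sh \in C -> \sum_k sym eta s k = \sum_k sym eta sh k) ->
  lik eta cs cn s r * (1 - pdetect eta cs cn C r s) <=
  \sum_(sh in C | sh != s) lik eta cs cn s r * \prod_k xk s sh t k ^+ r k.
Proof.
move=> ht sC hsum.
have hX0 : forall sh, 0 <= lik eta cs cn s r * \prod_k xk s sh t k ^+ r k.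
  move=> sh; rewrite mulr_ge0 ?(ltW (lik_gt0 _ _)) //.
  by apply: prodr_ge0 => k _; rewrite exprn_ge0 // expR_ge0.
case: (boolP [exists sh, [&& sh \in C, sh != s & lik eta cs cn s r <= lik eta cs cn sh r]]).
  move/existsP => [sh /and3P [shC shs hl]].
  rewrite (bigD1 sh) /=; last by rewrite shC shs.
  rewrite -[X in X <= _]addr0; apply: lerD; last by apply: sumr_ge0 => *; exact: hX0.
  apply: (@le_trans _ _ (lik eta cs cn s r)).
    rewrite -[X in _ <= X]mulr1 ler_wpM2l ?(ltW (lik_gt0 _ _)) //.
    by rewrite lerBlDr lerDl pdetect_ge0.
  rewrite -[X in X <= _]mulr1 ler_wpM2l ?(ltW (lik_gt0 _ _)) //.
  exact: X_ge1 (hsum _ shC) hl.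
rewrite negb_exists => /forallP hn.
have hml : mlset eta cs cn C r = [set s].
  apply/setP => c; rewrite !inE.
  apply/andP/eqP => [[cC /forall_inP hc]|->].
    apply/eqP; apply: contraT => ncs.
    by have := hn c; rewrite cC ncs /= (hc s sC).
  split => //; apply/forall_inP => c' c'C.
  case: (eqVneq c' s) => [->//|ne].
  by have := hn c'; rewrite c'C ne /= -ltNge => /ltW.
rewrite /pdetect hml inE eqxx cards1 invr1 subrr mulr0.
by apply: sumr_ge0 => *; exact: hX0.
Qed.

Lemma pair_bound (s sh : word L K) t :
  (\esum_(r in [set: obs K]) (lik eta cs cn s r * \prod_k xk s sh t k ^+ r k)%:E
   <= (expR (\sum_k (sym eta s k * cs + cn) * (xk s sh t k - 1)))%:E)%E.
Proof.
apply: ge_ereal_sup => _ [X [finX _]] <-.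
rewrite fsbig_finite //= sumEFin lee_fin.
have e : forall r : obs K, lik eta cs cn s r * \prod_k xk s sh t k ^+ r k =
   \prod_k (expR (- lam s k) * ((lam s k * xk s sh t k) ^+ r k / (r k)`!%:R)).
  move=> r; rewrite /lik -big_split; apply: eq_bigr => k _ /=.
  rewrite exprMn /lam.
  move: (_ ^+ r k) (expR _) (xk _ _ _ _ ^+ _) ((r k)`!%:R)^-1 => A B D E.
  ring.
rewrite (eq_bigr _ (fun r _ => e r)).
have hy : forall k, 0 <= lam s k * xk s sh t k.
  by move=> k; rewrite mulr_ge0 ?expR_ge0 // ltW // lam_gt0.
apply: le_trans (@core R K (fun k => lam s k) _ hy _ (finmap.fset_uniq _)) _.
rewrite expR_sum; rewrite le_eqVlt; apply/orP; left; apply/eqP; apply: eq_bigr => k _.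
rewrite -expRD /lam /sym; congr expR; ring.
Qed.

End S.

Theorem proposition2 (R : realType) (L : nat) (eta : 'I_L -> R)
  (hL : (2 <= L)%N)
  (eta_incr : forall i j : 'I_L, (i < j)%N -> eta i < eta j)
  (eta_first : forall i : 'I_L, val i = 0%N -> eta i = 0)
  (eta_last : forall i : 'I_L, val i = L.-1 -> eta i = 1)
  (K : nat) (omega : 'I_L -> nat) (C : {set word L K})
  (hC : is_SCW omega C) (hM : (2 <= #|C|)%N)
  (cs cn : R) (hcs : 0 < cs) (hcn : 0 < cn) (t : R) (ht : 0 < t) :
  (Pe_code eta cs cn C <= (chernoff_bound eta cs cn t C)%:E)%E.
Proof.
have heta : forall i, 0 <= eta i.
  move=> i; have L0 : (0 < L)%N by apply: leq_trans hL.
  case: (posnP (val i)) => [h|h]; first by rewrite eta_first.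
  rewrite -(eta_first (Ordinal L0) erefl); apply: ltW; exact: eta_incr.
have hsum : forall s sh, s \in C -> sh \in C ->
    \sum_k sym eta s k = \sum_k sym eta sh k.
  by move=> s sh sC shC; rewrite (@sym_sum _ _ _ eta _ _ hC _ sC) (@sym_sum _ _ _ eta _ _ hC _ shC).
rewrite /Pe_code /chernoff_bound /=.
rewrite EFinM; apply: lee_wpmul2l; first by rewrite lee_fin invr_ge0 ler0n.
rewrite -sumEFin; apply: lee_sum => s sC.
apply: (le_trans (@le_esum R _ setT _ (fun r => \sum_(sh in C | sh != s)
   (lik eta cs cn s r * \prod_k xk R L K eta cs cn s sh t k ^+ r k)%:E)%E _)).
  move=> r _; rewrite sumEFin lee_fin.
  exact: (@pointwise R L K eta cs cn heta hcs hcn C s r t ht sC (fun sh shC => hsum s sh sC shC)).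
rewrite esum_sum; last first.
  move=> r sh _ _; rewrite lee_fin mulr_ge0 ?(ltW (@lik_gt0 R L K eta cs cn heta hcs hcn _ _)) //.
  by apply: prodr_ge0 => k _; rewrite exprn_ge0 // expR_ge0.
rewrite -sumEFin; apply: lee_sum => sh _.
exact: pair_bound.
Qed.
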